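(* Let $G=(V,E)$ be a graph on $n\geq 2d+1$ vertices with minimum degree $\delta(G)=d$. Suppose that $\deg(u)+\deg(v)\geq n+d-2$ for all pairs of distinct non-adjacent vertices $u,v$ of $G$. Then $G$ is rigid in $\mathbb{R}^d$.
   Context: A graph is rigid in $\mathbb{R}^d$ if some (equivalently every) generic $d$-dimensional bar-and-joint framework of it (vertex positions with coordinates algebraically independent over $\mathbb{Q}$) admits no continuous edge-length-preserving motion changing some pairwise distance between vertices. *)

(* Defs.v *)
From HB Require Import structures.
From mathcomp Require Import all_boot all_order all_algebra.
From mathcomp Require Import all_classical all_reals all_analysis.
Set Implicit Arguments. Unset Strict Implicit. Unset Printing Implicit Defensive.
Import Order.TTheory GRing.Theory Num.Theory numFieldNormedType.Exports.
Local Open Scope ring_scope.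
Local Open Scope classical_set_scope.

Definition simple_graph (T : finType) (e : rel T) : Prop :=
  symmetric e /\ irreflexive e.

Definition deg (T : finType) (e : rel T) (v : T) : nat := #|[set u | e v u]|.

Definition min_degree_eq (T : finType) (e : rel T) (d : nat) : Prop :=
  (forall v, (d <= deg e v)%N) /\ exists v, deg e v = d.

Definition sqdist (R : realType) (T : finType) (d : nat) (p : T -> 'I_d -> R)
  (u v : T) : R := \sum_(i < d) (p u i - p v i) ^+ 2.

(* the coordinates (p v i) are algebraically independent over Q: for any
   finite family of distinct coordinates (indexed injectively by f) no nonzero
   polynomial with rational coefficients vanishes on it.  A polynomial in k
   variables whose partial degrees are < N is given by its coefficient
   function q on exponent vectors m : 'I_k -> 'I_N (every polynomial has
   this form for N large enough), and q is the zero polynomial iff q = 0. *)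
Definition generic (R : realType) (T : finType) (d : nat) (p : T -> 'I_d -> R)
  : Prop :=
  forall (k N : nat) (f : 'I_k -> (T * 'I_d)%type), injective f ->
  forall q : {ffun {ffun 'I_k -> 'I_N} -> rat}, q != 0 ->
    \sum_(m : {ffun 'I_k -> 'I_N})
       (ratr (q m) : R) * \prod_(j < k) (p (f j).1 (f j).2) ^+ (m j) != 0.

Definition edge_motion (R : realType) (T : finType) (e : rel T) (d : nat)
  (p : T -> 'I_d -> R) (x : R -> T -> 'I_d -> R) : Prop :=
  x 0 = p /\
  (forall v i, {within [set t : R | 0 <= t <= 1], continuous ((fun t => x t v i) : R -> R)}) /\
  (forall t, 0 <= t <= 1 -> forall u v, e u v -> sqdist (x t) u v = sqdist p u v).

Definition framework_rigid (R : realType) (T : finType) (e : rel T) (d : nat)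
  (p : T -> 'I_d -> R) : Prop :=
  forall x, edge_motion e p x ->
    forall t, 0 <= t <= 1 -> forall u v, sqdist (x t) u v = sqdist p u v.

Definition rigid_in (R : realType) (T : finType) (e : rel T) (d : nat) : Prop :=
  exists p : T -> 'I_d -> R, generic p /\ framework_rigid e p.

(* Main.v *)
Require Import Defs.
From HB Require Import structures.
From mathcomp Require Import all_boot all_order all_algebra.
From mathcomp Require Import all_classical all_reals all_analysis.
From mathcomp Require Import ring lra.
From mathcomp Require Import fingroup perm.
From mathcomp Require Import zify.
From mathcomp Require Import polyrcf.
Set Implicit Arguments. Unset Strict Implicit. Unset Printing Implicit Defensive.
Import Order.TTheory GRing.Theory Num.Theory numFieldNormedType.Exports.
Local Open Scope ring_scope.
Lemma det_schur (F : fieldType) m n (M : 'M[F]_(m + n)) :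
  ulsubmx M \in unitmx ->
  \det M = \det (ulsubmx M) *
     \det (drsubmx M - dlsubmx M *m invmx (ulsubmx M) *m ursubmx M).
Proof.
move=> uA.
set A := ulsubmx M; set B := ursubmx M; set C := dlsubmx M; set D := drsubmx M.
have -> : M = block_mx 1 0 (C *m invmx A) 1 *m block_mx A B 0 (D - C *m invmx A *m B).
  rewrite mulmx_block !mul1mx !mul0mx ?mulmx0 ?add0r ?addr0 -mulmxA mulVmx //.
  rewrite mulmx1 addrC subrK.
  by rewrite -[LHS]submxK.
by rewrite det_mulmx det_lblock !det1 mul1r det_ublock mul1r.
Qed.

Lemma lift2 (i : 'I_2) (j : 'I_1) : lift i j = if val i == 0%N then 1 else 0.
Proof. by apply/val_inj; case: i => [[|[|]]] //= _; case: j => [[|]]. Qed.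

Lemma det_mx2 (F : comNzRingType) (M : 'M[F]_2) :
  \det M = M 0 0 * M 1 1 - M 0 1 * M 1 0.
Proof.
rewrite (expand_det_row _ 0) !big_ord_recl big_ord0 addr0.
rewrite /cofactor !det_mx11 /= !mxE /= !lift2 /=.
rewrite /bump /= expr0 expr1 !mul1r mulN1r mulrN.
have -> : (ord0 : 'I_2) = 0 by apply/val_inj.
by [].
Qed.
Definition gram (R : realType) (T : Type) d (y : T -> 'I_d -> R) (o u v : T) : R :=
  \sum_k (y u k - y o k) * (y v k - y o k).

Section Core.
Variables (R : realType) (T : finType).

Lemma gramC d (y : T -> 'I_d -> R) o u v : gram y o u v = gram y o v u.
Proof. by apply: eq_bigr => k _; rewrite mulrC. Qed.

Lemma sqdistC d (y : T -> 'I_d -> R) u v : sqdist y u v = sqdist y v u.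
Proof. by apply: eq_bigr => k _; rewrite -sqrrN opprB. Qed.

Lemma sqdist_id d (y : T -> 'I_d -> R) u : sqdist y u u = 0.
Proof. by rewrite /sqdist big1 // => k _; rewrite subrr expr0n. Qed.

Lemma gram_sq d (y : T -> 'I_d -> R) o u v :
  gram y o u v = (sqdist y u o + sqdist y v o - sqdist y u v) / 2.
Proof.
rewrite /gram /sqdist -big_split -sumrB /= mulr_suml.
apply: eq_bigr => k _.
by field.
Qed.

Lemma gram_eq d (y p : T -> 'I_d -> R) o u v :
  sqdist y u o = sqdist p u o -> sqdist y v o = sqdist p v o ->
  sqdist y u v = sqdist p u v -> gram y o u v = gram p o u v.
Proof. by move=> h1 h2 h3; rewrite !gram_sq h1 h2 h3. Qed.

Definition Gm d n (y : T -> 'I_d -> R) (o : T) (vs : 'I_n -> T) : 'M[R]_n :=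
  \matrix_(i, j) gram y o (vs i) (vs j).

Lemma Gm_det0 d n (y : T -> 'I_d -> R) o (vs : 'I_n -> T) :
  (d < n)%N -> \det (Gm y o vs) = 0.
Proof.
move=> dn.
pose A : 'M[R]_(n, d) := \matrix_(i, k) (y (vs i) k - y o k).
have -> : Gm y o vs = A *m A^T.
  apply/matrixP => i j; rewrite !mxE; apply: eq_bigr => k _.
  by rewrite !mxE.
apply/eqP; apply: contraT => h.
have := mulmx_max_rank A A^T.
by rewrite mxrank_unit ?unitmxE ?unitfE // leqNgt dn.
Qed.

Definition vsof m (a : 'I_m.+1 -> T) (z w : T) (i : 'I_(m + 2)) : T :=
  match fintype.split i with
  | inl i' => a (lift ord0 i')
  | inr j => if val j == 0%N then z else w
  end.

Lemma vsof_l m a z w (i : 'I_m) : vsof a z w (lshift 2 i) = a (lift ord0 i).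
Proof. by rewrite /vsof (unsplitK (inl _ i)). Qed.

Lemma vsof_r m (a : 'I_m.+1 -> T) z w (j : 'I_2) :
  vsof a z w (rshift m j) = if val j == 0%N then z else w.
Proof. by rewrite /vsof (unsplitK (inr _ j)). Qed.

Lemma core m (p : T -> 'I_m.+1 -> R) (a : 'I_m.+1 -> T) (z w : T) :
  ulsubmx (Gm p (a 0) (vsof a z w)) \in unitmx ->
  exists be ga : R, forall y : T -> 'I_m.+1 -> R,
   (forall i j, sqdist y (a i) (a j) = sqdist p (a i) (a j)) ->
   (forall i, sqdist y z (a i) = sqdist p z (a i)) ->
   (forall i, sqdist y w (a i) = sqdist p w (a i)) ->
   gram y (a 0) z w ^+ 2 + be * gram y (a 0) z w + ga = 0.
Proof.
move=> U.
set Gp := Gm p (a 0) (vsof a z w).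
set E := dlsubmx Gp *m invmx (ulsubmx Gp) *m ursubmx Gp.
set c0 := gram p (a 0) z z; set c1 := gram p (a 0) w w.
exists (- (E 0 1 + E 1 0)), (E 0 1 * E 1 0 - (c0 - E 0 0) * (c1 - E 1 1)).
move=> y H1 H2 H3.
have Hzv : forall j : 'I_2, sqdist y (if val j == 0%N then z else w) (a 0)
    = sqdist p (if val j == 0%N then z else w) (a 0).
  by move=> j; case: ifP => _; [apply: H2|apply: H3].
have Hzv' : forall (j : 'I_2) i, sqdist y (a i) (if val j == 0%N then z else w)
    = sqdist p (a i) (if val j == 0%N then z else w).
  by move=> j i; rewrite sqdistC [RHS]sqdistC; case: ifP => _; [apply: H2|apply: H3].
set Gy := Gm y (a 0) (vsof a z w).
have eul : ulsubmx Gy = ulsubmx Gp.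
  by apply/matrixP => i j; rewrite !mxE !vsof_l; apply: gram_eq.
have eur : ursubmx Gy = ursubmx Gp.
  apply/matrixP => i j; rewrite !mxE vsof_l vsof_r; by apply: gram_eq => //; rewrite sqdistC [RHS]sqdistC.
have edl : dlsubmx Gy = dlsubmx Gp.
  apply/matrixP => i j; rewrite !mxE vsof_l vsof_r; by apply: gram_eq => //; rewrite sqdistC [RHS]sqdistC.
have d0 := Gm_det0 y (a 0) (vsof a z w) (_ : (m.+1 < m + 2)%N); have {d0} d0 := d0 ltac:(by rewrite addn2).
rewrite -/Gy det_schur eul // eur edl -/E in d0.
have nz : \det (ulsubmx Gp) != 0 by rewrite -unitfE -unitmxE.
move/eqP: d0; rewrite mulf_eq0 (negbTE nz) /= det_mx2 !mxE.
rewrite !vsof_r /=.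
have -> : gram y (a 0) z z = c0 by apply: gram_eq => //; rewrite !sqdist_id.
have -> : gram y (a 0) w w = c1 by apply: gram_eq => //; rewrite !sqdist_id.
rewrite [gram y (a 0) w z]gramC.
set s := gram y (a 0) z w.
move/eqP => h.
rewrite -[RHS]oppr0 -[X in _ = - X]h; ring.
Qed.
End Core.
Lemma eq_lc (R : comRingType) (X Y A k : R) : A = 0 -> X - Y = k * A -> X = Y.
Proof. by move=> -> /eqP; rewrite mulr0 subr_eq0 => /eqP. Qed.
Lemma eq_lc2 (R : comRingType) (X Y A1 A2 k1 k2 : R) : A1 = 0 -> A2 = 0 ->
  X - Y = k1 * A1 + k2 * A2 -> X = Y.
Proof. by move=> -> -> /eqP; rewrite !mulr0 addr0 subr_eq0 => /eqP. Qed.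
Section S_p3.
Local Open Scope classical_set_scope.
Lemma quad_const (R : realType) (s : R -> R) (be ga : R) :
  {within [set t : R | 0 <= t <= 1], continuous s} ->
  (forall t : R, 0 <= t <= 1 -> s t ^+ 2 + be * s t + ga = 0) ->
  forall t : R, 0 <= t <= 1 -> s t = s 0.
Proof.
move=> cs hq t /andP[t0 t1].
apply/eqP; apply: contraT => hne.
set s0 := s 0; set s1 := s t.
have cst : {within `[0, t], continuous s}.
  apply: (continuous_subspaceW _ cs) => x /=; rewrite in_itv /= => /andP[x0 xt].
  by rewrite x0 /= (le_trans xt t1).
have hv : Num.min (s 0) (s t) <= (s0 + s1) / 2 <= Num.max (s 0) (s t).
  rewrite -/s0 -/s1.
  case: (leP s0 s1) => h.
    by rewrite ler_pdivlMr // ler_pdivrMr //; apply/andP; split; lra.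
  by rewrite ler_pdivlMr // ler_pdivrMr //; apply/andP; split; lra.
have [c c01 sc] := @IVT R s 0 t ((s0 + s1) / 2) t0 cst hv.
move: c01; rewrite in_itv /= => /andP[c0 ct].
have h0 := hq 0 ltac:(by rewrite lexx ler01).
have h1 := hq t ltac:(by rewrite t0 t1).
have hc := hq c ltac:(by rewrite c0 (le_trans ct t1)).
rewrite sc -/s0 in h0 hc; rewrite -/s1 in h1.
have hb : be = - (s0 + s1).
  have : (s1 - s0) * (s0 + s1 + be) = 0.
    by apply: (eq_lc2 (k1 := 1) (k2 := -1) h1 h0); ring.
  move/eqP; rewrite mulf_eq0 subr_eq0 (negbTE hne) /= => /eqP h.
  by apply: (eq_lc (k := 1) h); ring.
have hg : ga = s0 * s1.
  have hb' : be + (s0 + s1) = 0 by rewrite hb; ring.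
  by apply: (eq_lc2 (k1 := 1) (k2 := - s0) h0 hb'); ring.
rewrite hb hg in hc.
have : (s1 - s0) ^+ 2 = 0.
  by apply: (eq_lc (k := -4) hc); field.
move/eqP; rewrite sqrf_eq0 subr_eq0 (negbTE hne) //.
Qed.
End S_p3.
Definition Hmx (R : realType) (T : finType) m (p : T -> 'I_m.+1 -> R) (a : 'I_m.+1 -> T)
  : 'M[R]_m.+1 := \matrix_(j, i) if i == ord_max then 1 else p (a j) i.

Lemma ltn_b2 (b : bool) : (nat_of_bool b < 2)%N. Proof. by case: b. Qed.
Definition ex2 (b : bool) : 'I_2 := Ordinal (ltn_b2 b).

Lemma generic_detH (R : realType) (T : finType) m (p : T -> 'I_m.+1 -> R)
  (a : 'I_m.+1 -> T) : generic p -> injective a -> \det (Hmx p a) != 0.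
Proof.
move=> gen ainj.
pose V : finType := ('I_m.+1 * 'I_m.+1)%type.
pose f (l : 'I_#|V|) : T * 'I_m.+1 := (a (enum_val l).1, (enum_val l).2).
have finj : injective f.
  move=> l1 l2 [] /ainj e1 e2; apply: enum_val_inj.
  by move: e1 e2; case: (enum_val l1) => ? ?; case: (enum_val l2) => ? ? /= -> ->.
pose M (s : 'S_m.+1) : {ffun 'I_#|V| -> 'I_2} :=
  [ffun l => ex2 ((s (enum_val l).1 == (enum_val l).2) && ((enum_val l).2 != ord_max))].
have Minj : forall s t, M s = M t -> s = t.
  have half : forall s t j, M s = M t -> s j != ord_max -> t j = s j.
    move=> s t j e ne.
    have := congr1 (fun g : {ffun 'I_#|V| -> 'I_2} => val (g (enum_rank ((j, s j) : V)))) e.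
    rewrite /M !ffunE enum_rankK /= eqxx ne /=.
    by case: eqP.
  move=> s t e; apply/permP => j.
  case: (eqVneq (s j) ord_max) => hs; last by rewrite (half s t j e hs).
  case: (eqVneq (t j) ord_max) => ht; first by rewrite hs ht.
  by rewrite (half t s j (esym e) ht).
pose q : {ffun {ffun 'I_#|V| -> 'I_2} -> rat} :=
  [ffun mm => \sum_(s : 'S_m.+1) if mm == M s then (-1) ^+ s else 0].
have qnz : q != 0.
  apply/negP => /eqP q0.
  have := congr1 (fun g : {ffun {ffun 'I_#|V| -> 'I_2} -> rat} => g (M 1%g)) q0; rewrite !ffunE.
  rewrite (bigD1 1%g) //= eqxx big1 ?addr0 ?odd_perm1 ?expr0.
    by move/eqP; rewrite oner_eq0.
  by move=> s /negbTE ns; case: eqP => // /Minj e; rewrite e eqxx in ns.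
have := gen #|V| 2 f finj q qnz.
congr (_ != 0).
rewrite /determinant.
under eq_bigr do rewrite ffunE rmorph_sum mulr_suml.
rewrite exchange_big /=; apply: eq_bigr => s _.
under eq_bigr => i _ do rewrite (fun_if ratr) rmorph0 (fun_if (fun x => x * _)) mul0r.
rewrite -big_mkcond /= big_pred1_eq.
rewrite rmorph_sign; congr (_ * _).
rewrite (eq_bigr (fun l => p (a (enum_val l).1) (enum_val l).2 ^+
   ((s (enum_val l).1 == (enum_val l).2) && ((enum_val l).2 != ord_max)))); last first.
  by move=> l _; rewrite ffunE.
rewrite -(big_enum_val (fun v : V => p (a v.1) v.2 ^+ ((s v.1 == v.2) && (v.2 != ord_max)))).
rewrite -(pair_big xpredT xpredT (fun j i => p (a j) i ^+ ((s j == i) && (i != ord_max)))) /=.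
apply: eq_bigr => j _.
rewrite (bigD1 (s j)) //= eqxx big1 ?mulr1; last first.
  by move=> i /negbTE; rewrite eq_sym => ->; rewrite expr0.
rewrite mxE; case: eqP => _ /=; by rewrite ?expr0 ?expr1.
Qed.
Lemma ul_unit (R : realType) (T : finType) m (p : T -> 'I_m.+1 -> R)
  (a : 'I_m.+1 -> T) (z w : T) :
  \det (Hmx p a) != 0 -> ulsubmx (Gm p (a 0) (vsof a z w)) \in unitmx.
Proof.
move=> hH.
pose Ab : 'M[R]_(m, m.+1) := \matrix_(i, k) (p (a (lift ord0 i)) k - p (a ord0) k).
have e0 : (0 : 'I_m.+1) = ord0 by apply/val_inj.
have -> : ulsubmx (Gm p (a 0) (vsof a z w)) = Ab *m Ab^T.
  apply/matrixP => i j; rewrite !mxE !vsof_l e0; apply: eq_bigr => k _.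
  by rewrite !mxE.
rewrite unitmxE unitfE; apply: contra hH => /det0P [v vnz hv].
apply/det0P.
pose u := v *m Ab.
have u0 : forall k, u 0 k = 0.
  have uu : (u *m u^T) 0 0 = 0.
    by rewrite trmx_mul mulmxA -(mulmxA v) hv mul0mx mxE.
  move: uu; rewrite mxE => /eqP; rewrite psumr_eq0; last first.
    by move=> k _; rewrite [u^T _ _]mxE -expr2 sqr_ge0.
  move=> /allP h k; have := h k (mem_index_enum _).
  by rewrite [u^T _ _]mxE -expr2 sqrf_eq0 => /eqP.
exists (\row_j (match unlift ord0 j with Some i => v 0 i | None => - \sum_i v 0 i end)).
  apply: contra vnz => /eqP w0; apply/eqP/matrixP => i j.
  have := congr1 (fun M : 'rV_m.+1 => M 0 (lift ord0 j)) w0.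
  by rewrite !mxE liftK (ord1 i).
apply/matrixP => i k; rewrite !mxE big_ord_recl /= !mxE unlift_none.
rewrite [X in _ + X = _](eq_bigr (fun i0 => v 0 i0 *
    (if k == ord_max then 1 else p (a (lift ord0 i0)) k))); last first.
  by move=> i0 _; rewrite !mxE liftK.
case: eqP => hk.
  rewrite mulr1 [X in _ + X = _](eq_bigr (fun i0 => v 0 i0)); last by move=> i0 _; rewrite mulr1.
  by rewrite addrC subrr.
have := u0 k; rewrite !mxE.
rewrite (eq_bigr (fun i0 => v 0 i0 * p (a (lift ord0 i0)) k - v 0 i0 * p (a ord0) k)); last first.
  by move=> i0 _; rewrite mxE mulrBr.
rewrite sumrB -mulr_suml => h.
by rewrite -[RHS]h addrC mulNr.
Qed.
Section S_p6.
Local Open Scope classical_set_scope.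
Lemma cont_sum (K : numFieldType) (Tp : topologicalType) n (g : 'I_n -> Tp -> K) :
  (forall k, continuous (g k)) -> continuous (fun t => \sum_(k < n) g k t).
Proof.
elim: n g => [|n IH] g hg.
  under eq_fun do rewrite big_ord0.
  by move=> t; apply: cst_continuous.
under eq_fun do rewrite big_ord_recr.
move=> t; apply: continuousD; last exact: hg.
by apply: (IH (fun k => g (widen_ord (leqnSn n) k))) => k; apply: hg.
Qed.

Lemma cont_gram (R : realType) (T : Type) (Tp : topologicalType) d
  (X : Tp -> T -> 'I_d -> R) o u v :
  (forall w i, continuous (fun t => X t w i)) -> continuous (fun t => gram (X t) o u v).
Proof.
move=> hX; rewrite /gram.
apply: cont_sum => k t.
exact: (@continuousM R Tp (fun t => X t u k - X t o k) (fun t => X t v k - X t o k) t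
  (@continuousB R R^o Tp (fun t => X t u k) (fun t => X t o k) t (hX _ _ t) (hX _ _ t))
  (@continuousB R R^o Tp (fun t => X t v k) (fun t => X t o k) t (hX _ _ t) (hX _ _ t))).
Qed.
End S_p6.
Definition pres (R : realType) (T : finType) d (x : R -> T -> 'I_d -> R)
  (p : T -> 'I_d -> R) (S : {set T}) : Prop :=
  forall t : R, 0 <= t <= 1 -> forall u v, u \in S -> v \in S ->
    sqdist (x t) u v = sqdist p u v.

Lemma step (R : realType) (T : finType) m (e : rel T) (p : T -> 'I_m.+1 -> R)
  (x : R -> T -> 'I_m.+1 -> R) (S : {set T}) (a : 'I_m.+1 -> T) (z : T) :
  generic p -> edge_motion e p x -> injective a -> (forall i, a i \in S) ->
  (forall i, e z (a i)) -> pres x p S -> pres x p (z |: S).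
Proof.
move=> gen [x0 [xc xe]] ainj aS ez pS.
have key : forall w, w \in S -> forall t : R, 0 <= t <= 1 ->
    sqdist (x t) z w = sqdist p z w.
  move=> w wS.
  have U := ul_unit z w (generic_detH gen ainj).
  have [be [ga hq]] := core U.
  pose s := fun t => gram (x t) (a 0) z w.
  have hs : forall t : R, 0 <= t <= 1 -> s t ^+ 2 + be * s t + ga = 0.
    move=> t t01; apply: hq.
    - by move=> i j; apply: pS.
    - by move=> i; apply: xe => //; apply: ez.
    - by move=> i; apply: pS.
  have cs : ({within [set t : R | 0 <= t <= 1], continuous s})%classic.
    exact: (cont_gram (X := fun t : subspace [set t : R | 0 <= t <= 1]%classic => x t)).
  move=> t t01.
  have st := quad_const cs hs t01.
  have s0 : s 0 = gram p (a 0) z w by rewrite /s x0.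
  have e1 : sqdist (x t) z (a 0) = sqdist p z (a 0) by apply: xe.
  have e2 : sqdist (x t) w (a 0) = sqdist p w (a 0) by apply: pS.
  have := gram_sq (x t) (a 0) z w; rewrite -/(s t) st s0 gram_sq e1 e2 => h.
  lra.
move=> t t01 u v; rewrite !in_setU1 => /orP[/eqP->|uS] /orP[/eqP->|vS].
- by rewrite !sqdist_id.
- exact: key.
- by rewrite sqdistC [RHS]sqdistC; apply: key.
- exact: pS.
Qed.
Lemma deg_eq (T : finType) (e : rel T) v : deg e v = #|[set u | e v u]%SET|.
Proof.
apply: eq_card => y; rewrite [in RHS]inE.
by apply/idP/idP; rewrite in_setE.
Qed.
Section Uncount.
Local Open Scope classical_set_scope.
Lemma R_uncountable (R : realType) : ~ countable [set: R].
Proof.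
move=> c.
have cA : countable `[(0:R), 1] by apply: (sub_countable _ c); apply: subset_card_le.
have := countable_lebesgue_measure0 cA.
rewrite lebesgue_measure_itv /= lte_fin ltr01 /= oppr0 adde0.
by move/eqP; rewrite eqe oner_eq0.
Qed.
End Uncount.
Section Gen.
Variable R : realType.

Definition evalS (s : seq R) k N (f : 'I_k -> nat) (q : {ffun {ffun 'I_k -> 'I_N} -> rat}) : R :=
  \sum_(mm : {ffun 'I_k -> 'I_N}) ratr (q mm) * \prod_(j < k) (nth 0 s (f j)) ^+ mm j.

Definition Dty := {k : nat & {N : nat &
  ({ffun 'I_k -> nat} * {ffun 'I_N -> {ffun {ffun 'I_k -> 'I_N} -> rat}})%type}}.

Definition polyD (s : seq R) (D : Dty) : {poly R} :=
  match D with existT k (existT N fc) =>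
    \sum_(i < N) (evalS s fc.1 (fc.2 i))%:P * 'X^i end.

Definition Bad (s : seq R) : set R :=
  (\bigcup_(D in [set: Dty]) [set y | polyD s D != 0 /\ root (polyD s D) y])%classic.

Lemma Bad_countable s : countable (Bad s).
Proof.
apply: bigcup_countable; first exact: (countableP (T := (Dty : countType))).
move=> D _; apply: finite_set_countable.
case: (eqVneq (polyD s D) 0) => [->|nz].
  by apply: (sub_finite_set _ (finite_set0 R)) => y /= [].
apply: (sub_finite_set _ (finite_seq (rootsR (polyD s D)))) => y /= [_ ry].
by rewrite -(roots_on_rootsR nz) ry in_itv.
Qed.

Lemma exists_notBad s : exists y, ~ Bad s y.
Proof.
apply: contrapT => h; apply: (@R_uncountable R).
apply: (sub_countable _ (Bad_countable s)); apply: subset_card_le => y _.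
by apply: contrapT => hy; apply: h; exists y.
Qed.

Definition nextr (s : seq R) : R := xget 0 (fun y => ~ Bad s y).

Lemma nextr_good s : ~ Bad s (nextr s).
Proof. exact: (xgetPex 0 (exists_notBad s)). Qed.

Fixpoint gs (n : nat) : seq R :=
  if n is n'.+1 then rcons (gs n') (nextr (gs n')) else [::].

Definition rr (n : nat) : R := nextr (gs n).

Lemma size_gs n : size (gs n) = n.
Proof. by elim: n => //= n IH; rewrite size_rcons IH. Qed.

Lemma nth_gs n j : (j < n)%N -> nth 0 (gs n) j = rr j.
Proof.
elim: n => // n IH; rewrite ltnS leq_eqVlt => /orP[/eqP->|jn] /=.
  by rewrite nth_rcons size_gs ltnn eqxx.
by rewrite nth_rcons size_gs jn IH.
Qed.

Lemma rr_good M : ~ Bad (gs M) (rr M).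
Proof. exact: nextr_good. Qed.

End Gen.
Section Claim.
Variable R : realType.

Definition evalR k N (f : 'I_k -> nat) (q : {ffun {ffun 'I_k -> 'I_N} -> rat}) : R :=
  \sum_(mm : {ffun 'I_k -> 'I_N}) ratr (q mm) * \prod_(j < k) (rr R (f j)) ^+ mm j.

Definition extf k N (j0 : 'I_k.+1) (mm : {ffun 'I_k -> 'I_N}) (e : 'I_N)
  : {ffun 'I_k.+1 -> 'I_N} :=
  [ffun j => if unlift j0 j is Some j' then mm j' else e].

Definition restrf k N (j0 : 'I_k.+1) (mm : {ffun 'I_k.+1 -> 'I_N}) : {ffun 'I_k -> 'I_N} :=
  [ffun j => mm (lift j0 j)].

Lemma extfK k N j0 (mm : {ffun 'I_k.+1 -> 'I_N}) :
  @extf k N j0 (restrf j0 mm) (mm j0) = mm.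
Proof.
apply/ffunP => j; rewrite ffunE.
by case: unliftP => [j' ->|->] //; rewrite ffunE.
Qed.

Lemma sum_split k N j0 (F : {ffun 'I_k.+1 -> 'I_N} -> R) :
  \sum_mm F mm = \sum_(e : 'I_N) \sum_(mm' : {ffun 'I_k -> 'I_N}) F (extf j0 mm' e).
Proof.
rewrite pair_big /=.
rewrite (reindex (fun p : 'I_N * {ffun 'I_k -> 'I_N} => extf j0 p.2 p.1)) //.
apply: onW_bij.
exists (fun mm : {ffun 'I_k.+1 -> 'I_N} => (mm j0, restrf j0 mm)).
  move=> [e mm] /=; congr (_, _).
    by rewrite ffunE unlift_none.
  by apply/ffunP => j; rewrite !ffunE liftK.
by move=> mm /=; rewrite extfK.
Qed.

Lemma prod_split k N j0 (mm : {ffun 'I_k -> 'I_N}) (e : 'I_N) (x : 'I_k.+1 -> R) :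
  \prod_(j < k.+1) x j ^+ (extf j0 mm e j) =
  x j0 ^+ e * \prod_(j < k) x (lift j0 j) ^+ mm j.
Proof.
rewrite (bigD1_ord j0) //= ffunE unlift_none; congr (_ * _).
by apply: eq_bigr => j _; rewrite ffunE liftK.
Qed.

Lemma claim k : forall (f : 'I_k -> nat), injective f ->
  forall N (q : {ffun {ffun 'I_k -> 'I_N} -> rat}), q != 0 -> evalR f q != 0.
Proof.
elim: k => [|k IH] f finj N q qnz.
  have [mm qm] : exists mm, q mm != 0.
    apply/existsP; apply: contraNT qnz => /existsPn h.
    by apply/eqP/ffunP => mm; rewrite ffunE; apply/eqP; exact: negbNE (h mm).
  rewrite /evalR (big_pred1 mm) ?big_ord0 ?mulr1 ?fmorph_eq0 //.
  by move=> mm'; apply/esym/eqP/ffunP => -[].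
have [mm qm] : exists mm, q mm != 0.
  apply/existsP; apply: contraNT qnz => /existsPn h.
  by apply/eqP/ffunP => mm'; rewrite ffunE; apply/eqP; exact: negbNE (h mm').
have [j0 hj0] := bigop.eq_bigmax f ltac:(by rewrite card_ord).
set M := f j0.
have flt : forall j, (f (lift j0 j) < M)%N.
  move=> j; rewrite /M ltn_neqAle -hj0 leq_bigmax andbT hj0.
  by apply/eqP => /finj /eqP; rewrite eq_sym (negbTE (neq_lift j0 j)).
pose f' : 'I_k -> nat := fun j => f (lift j0 j).
have f'inj : injective f' by move=> i j /finj /lift_inj.
pose qe (e : 'I_N) : {ffun {ffun 'I_k -> 'I_N} -> rat} := [ffun mm' => q (extf j0 mm' e)].
have qe0 : qe (mm j0) != 0.
  apply/negP => /eqP h; have := congr1 (fun g : {ffun {ffun 'I_k -> 'I_N} -> rat} => g (restrf j0 mm)) h.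
  by rewrite !ffunE extfK; apply/eqP.
pose D : Dty := existT _ k (existT _ N ([ffun j => f' j], [ffun e => qe e])).
have hcoef : forall e, evalS (gs R M) [ffun j => f' j] ([ffun e => qe e] e) = evalR f' (qe e).
  move=> e; rewrite /evalS /evalR ffunE; apply: eq_bigr => mm' _; congr (_ * _).
  by apply: eq_bigr => j _; rewrite ffunE nth_gs //; apply: flt.
have hP : polyD (gs R M) D = \sum_(i < N) (evalR f' (qe i))%:P * 'X^i.
  by apply: eq_bigr => i _; rewrite hcoef.
have Pnz : polyD (gs R M) D != 0.
  rewrite hP; apply/negP => /eqP h0.
  have := congr1 (fun p : {poly R} => p`_(mm j0)) h0.
  rewrite coef0 coef_sum (bigD1 (mm j0)) //= coefCM coefXn eqxx mulr1 big1 ?addr0.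
    by move/eqP; rewrite (negbTE (IH f' f'inj N _ qe0)).
  by move=> i /negbTE ne; rewrite coefCM coefXn eq_sym; case: eqP => [/val_inj e|]; [rewrite e eqxx in ne|rewrite mulr0].
have evq : evalR f q = (polyD (gs R M) D).[rr R M].
  rewrite hP horner_sum /evalR (sum_split j0); apply: eq_bigr => e _.
  rewrite hornerCM hornerXn /evalR mulr_suml; apply: eq_bigr => mm' _.
  rewrite prod_split ffunE -/M; ring.
rewrite evq; apply/negP => /eqP r0.
apply: (@rr_good R M).
by exists D => //; split => //; apply/eqP.
Qed.
End Claim.
Lemma exists_generic (R : realType) (T : finType) d :
  exists p : T -> 'I_d -> R, generic p.
Proof.
exists (fun v i => rr R (enum_rank ((v, i) : T * 'I_d))).
move=> k N f finj q qnz.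
have fi : injective (fun j => val (enum_rank (f j))).
  by move=> i j /val_inj /enum_rank_inj /finj.
have := claim R fi qnz.
congr (_ != 0); apply: eq_bigr => mm _; congr (_ * _); apply: eq_bigr => j _.
by case: (f j).
Qed.

Lemma mem_foldrU (T : finType) (W : {set T}) (l : seq T) v :
  (v \in foldr (fun y S => y |: S) W l) = (v \in l) || (v \in W).
Proof. by elim: l => [|y l IH] //=; rewrite finset.in_setU1 IH orbA. Qed.

Theorem lemma4p2 (R : realType) (T : finType) (e : rel T) (d : nat) :
  simple_graph e ->
  (2 * d + 1 <= #|T|)%N ->
  min_degree_eq e d ->
  (forall u v : T, u != v -> ~~ e u v -> (#|T| + d - 2 <= deg e u + deg e v)%N) ->
  rigid_in R e d.
Proof.
move=> [esy eirr] hn [mind [u du]] hore.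
have [p gen] := exists_generic R T d.
exists p; split => // x xm t t01 v1 v2.
case: d p gen x xm hn mind du hore => [|m] p gen x xm hn mind du hore.
  by rewrite /sqdist !big_ord0.
have xm' := xm; case: xm' => [x0 [xc xe]].
pose N := [set w | e u w].
pose W := [set w | (w != u) && ~~ e u w].
have hN : #|N| = m.+1 by rewrite -du deg_eq.
have inN : forall w, (w \in N) = e u w by move=> w; rewrite /N inE.
have inW : forall w, (w \in W) = (w != u) && ~~ e u w by move=> w; rewrite /W inE.
have c1 : forall w, w \in W -> forall v, v != w -> v != u -> e w v.
  move=> w; rewrite inW => /andP[wu euw] v vw vu.
  apply: contraT => ewv.
  have := hore u w ltac:(by rewrite eq_sym) euw; rewrite du => hd.
  have sub : [set y | e w y] \subset ~: (w |: [set u; v]).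
    apply/fintype.subsetP => y; rewrite !inE => ewy.
    apply/negP => /or3P[/eqP eyw|/eqP eyu|/eqP eyv].
    - by rewrite eyw eirr in ewy.
    - by rewrite eyu esy (negbTE euw) in ewy.
    - by rewrite eyv (negbTE ewv) in ewy.
  have := subset_leq_card sub.
  have := cardsC (w |: [set u; v]).
  rewrite cardsU1 cards2 !inE negb_or wu (eq_sym w v) vw (eq_sym u v) vu /=.
  rewrite deg_eq in hd.
  move: hd hn; set n := #|T|; set dw := #|[set y | e w y]|; move=> h1 h2 h3 h4; exfalso; lia.
have hW : (m.+1 <= #|W|)%N.
  have eW : W = ~: (u |: N).
    by apply/setP => w; rewrite inW finset.in_setC finset.in_setU1 inN negb_or.
  have := cardsC (u |: N); rewrite -eW cardsU1 hN inN eirr /=.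
  move: hn; set n := #|T|; move=> h1 h2; lia.
pose aW (i : 'I_m.+1) : T := enum_val (widen_ord hW i).
have aWinj : injective aW.
  by move=> i j /enum_val_inj /(congr1 val) /= /val_inj.
have aWW : forall i, aW i \in W by move=> i; apply: enum_valP.
pose aN (i : 'I_m.+1) : T := enum_val (cast_ord (esym hN) i).
have aNinj : injective aN.
  by move=> i j /enum_val_inj /(congr1 val) /= /val_inj.
have aNN : forall i, aN i \in N by move=> i; apply: enum_valP.
have WN : forall w, w \in W -> w \notin N.
  by move=> w; rewrite inW inN => /andP[_ ->].
have pW : pres x p W.
  move=> s s01 w1 w2 w1W w2W.
  case: (eqVneq w1 w2) => [->|ne]; first by rewrite !sqdist_id.
  apply: xe => //; apply: c1 => //; first by rewrite eq_sym.
  by move: w2W; rewrite inW => /andP[].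
have pS1 : forall l, (forall y, y \in l -> y \in N) ->
    pres x p (foldr (fun y S => y |: S) W l).
  elim => [|y l IH] hl //=.
  apply: (step gen xm aWinj).
  - by move=> i; rewrite mem_foldrU aWW orbT.
  - move=> i; rewrite esy; apply: c1 => //.
      apply/eqP => eq; have := WN _ (aWW i); rewrite -eq hl ?mem_head //.
    by apply/eqP => eq; have := hl y (mem_head _ _); rewrite eq inN eirr.
  - by apply: IH => z zl; apply: hl; rewrite inE zl orbT.
have pS := pS1 (enum N) ltac:(by move=> y; rewrite mem_enum).
have aNS : forall i, aN i \in foldr (fun y S => y |: S) W (enum N).
  by move=> i; rewrite mem_foldrU mem_enum aNN.
have euN : forall i, e u (aN i) by move=> i; have := aNN i; rewrite inN.
have pT := step gen xm aNinj aNS euN pS.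
apply: pT => //.
- by rewrite finset.in_setU1 mem_foldrU mem_enum inN inW; case: eqP; case: (e u v1); rewrite ?orbT.
- by rewrite finset.in_setU1 mem_foldrU mem_enum inN inW; case: eqP; case: (e u v2); rewrite ?orbT.
Qed.
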